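(* In the construction described in the context, for every $i\in\{1,\dots,t-1\}$ we have $C_i\subseteq F$.
   Context: Setting: $G=(V,E)$ is a connected finite undirected graph (parallel edges allowed), $w:E\to\mathbb{R}_{\ge0}$ edge weights, $c:E\to\mathbb{R}_{>0}$ edge costs, $n=|V|$. For $S\subseteq V$, $C_G(S)=\{e\in E:|e\cap S|=1\}$ (complete cut; its edges cross it) and $C_G(S,W)=\{e\in C_G(S):w(e)<W\}$ (partial cut). $F\subseteq E$ is a set with $G'=G\setminus F=(V,E\setminus F)$ connected; $B=c(F)$ and $\Delta=\mathrm{MST}(G')-\mathrm{MST}(G)$ (MST weights w.r.t. $w$). Construction: let $T$ be a minimum spanning tree of $G$ and $T\cap F=\{e_1,\dots,e_{t-1}\}$, with $t\ge2$. Removing these edges splits $T$ into components with vertex sets $A_1,\dots,A_t$ (a partition of $V$). Let $G'_{cc}$ be the multigraph with vertex set $V_{cc}=\{A_1,\dots,A_t\}$ having, for every edge $\{u,v\}\in E\setminus F$ with $u\in A_i$, $v\in A_j$, an edge between $A_i$ and $A_j$ of weight $w(\{u,v\})$ (identified with the original edge). Let $T'_{cc}$ be a minimum spanning tree of $G'_{cc}$, with edges $e'_1,\dots,e'_{t-1}$ indexed so that $w(e'_1)\le\dots\le w(e'_{t-1})$ (ties broken arbitrarily). For each $i$, deleting $e'_i,e'_{i+1},\dots,e'_{t-1}$ from $T'_{cc}$ leaves a forest in which $e'_i$ joins two components $L_i,R_i\subseteq V_{cc}$. Counters $k(A)=0$ for all $A\in V_{cc}$ initially, and $k(S)=\max_{A\in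 S}k(A)$. For $i=1,\dots,t-1$ in order: set $X_i=L_i$ if $k(L_i)\le k(R_i)$, else $X_i=R_i$; then increase $k(A)$ by $1$ for every $A\in X_i$. Identifying a set of vertices of $G'_{cc}$ with the union of the corresponding vertex sets in $V$, define $C_i=C_G(X_i,w(e'_i))$. *)

(* Defs.v *)
From HB Require Import structures.
From mathcomp Require Import all_boot all_order all_algebra.
Set Implicit Arguments. Unset Strict Implicit. Unset Printing Implicit Defensive.
Import Order.TTheory GRing.Theory Num.Theory.
Local Open Scope ring_scope.

(* A finite multigraph is given by a vertex type Vt, an edge-identifier type Et
   and an endpoint map ends : Et -> Vt * Vt (orientation is irrelevant:
   everything below is symmetric in the two endpoints). *)
Section Multigraph.
Variables (Vt Et : finType) (ends : Et -> Vt * Vt).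

Definition adj (S : {set Et}) : rel Vt :=
  fun u v => [exists e in S, (ends e == (u, v)) || (ends e == (v, u))].

Definition connected_on (Vs : {set Vt}) (S : {set Et}) : Prop :=
  forall u v, u \in Vs -> v \in Vs -> connect (adj S) u v.

(* S is acyclic: no edge of S lies on a cycle of S (loops are cycles) *)
Definition is_forest (S : {set Et}) : Prop :=
  forall e, e \in S -> ~~ connect (adj (S :\ e)) (ends e).1 (ends e).2.

Definition spanning_tree (Vs : {set Vt}) (Es T : {set Et}) : Prop :=
  [/\ T \subset Es, connected_on Vs T & is_forest T].

Variables (R : numDomainType) (w : Et -> R).

Definition tweight (T : {set Et}) : R := \sum_(e in T) w e.

Definition is_MST (Vs : {set Vt}) (Es T : {set Et}) : Prop :=
  spanning_tree Vs Es T /\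
  forall T', spanning_tree Vs Es T' -> tweight T <= tweight T'.

Definition cut (S : {set Vt}) : {set Et} :=
  [set e | ((ends e).1 \in S) != ((ends e).2 \in S)].

Definition pcut (S : {set Vt}) (W : R) : {set Et} :=
  [set e in cut S | w e < W].
End Multigraph.

Section Construction.
Variables (V E : finType) (ends : E -> V * V) (T F : {set E}).

Definition comp (v : V) : {set V} := [set u | connect (adj ends (T :\: F)) v u].

Definition Vcc : {set {set V}} := [set comp v | v : V].

(* endpoints of an edge in the contracted multigraph G'_cc (edge set E \ F) *)
Definition ends_cc (e : E) : {set V} * {set V} := (comp (ends e).1, comp (ends e).2).

(* components L, R (sets of vertices of G'_cc) of the forest formed by the
   edges [pre] = e'_1, ..., e'_{i-1}, containing the two endpoints of e = e'_i *)
Definition Lset (pre : seq E) (e : E) : {set {set V}} :=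
  [set A in Vcc | connect (adj ends_cc [set x in pre]) (ends_cc e).1 A].
Definition Rset (pre : seq E) (e : E) : {set {set V}} :=
  [set A in Vcc | connect (adj ends_cc [set x in pre]) (ends_cc e).2 A].

Definition kmax (k : {set V} -> nat) (S : {set {set V}}) : nat :=
  (\max_(A in S) k A)%N.

Definition choose_X (k : {set V} -> nat) (L R : {set {set V}}) : {set {set V}} :=
  if (kmax k L <= kmax k R)%N then L else R.

Fixpoint steps (k : {set V} -> nat) (pre rest : seq E)
  : seq (E * {set {set V}}) :=
  match rest with
  | [::] => [::]
  | e :: rest' =>
      let X := choose_X k (Lset pre e) (Rset pre e) in
      (e, X) :: steps (fun A => (k A + (A \in X))%N) (rcons pre e) rest'
  end.

Definition counter_steps (s : seq E) := steps (fun _ => 0%N) [::] s.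

(* identification of a set of vertices of G'_cc with a set of vertices of G *)
Definition union_cc (X : {set {set V}}) : {set V} := \bigcup_(A in X) A.
End Construction.

(* Main.v *)
Require Import Defs.
From HB Require Import structures.
From mathcomp Require Import all_boot all_order all_algebra.
Set Implicit Arguments. Unset Strict Implicit. Unset Printing Implicit Defensive.
Import Order.TTheory GRing.Theory Num.Theory.
Local Open Scope ring_scope.

Section G.
Variables (Vt Et : finType) (en : Et -> Vt * Vt).

Lemma adjC (S : {set Et}) : symmetric (adj en S).
Proof.
move=> u v; apply/existsP/existsP => -[e /andP[eS h]]; exists e; by rewrite eS /= orbC.
Qed.

Lemma connC (S : {set Et}) : connect_sym (adj en S).
Proof. exact: sym_connect_sym (adjC S). Qed.

Lemma adj_sub (S S' : {set Et}) : S \subset S' -> subrel (adj en S) (adj en S').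
Proof.
move=> sub u v /existsP[e /andP[eS h]]; apply/existsP; exists e; by rewrite (subsetP sub).
Qed.

Lemma conn_sub (S S' : {set Et}) : S \subset S' -> subrel (connect (adj en S)) (connect (adj en S')).
Proof. move=> sub; apply: connect_sub => u v h; apply: connect1; exact: adj_sub h. Qed.

Lemma conn_repl (S S' : {set Et}) g : S \subset g |: S' ->
  connect (adj en S') (en g).1 (en g).2 ->
  subrel (connect (adj en S)) (connect (adj en S')).
Proof.
move=> sub hg; apply: connect_sub => u v /existsP[e /andP[eS h]].
move: (subsetP sub e eS); rewrite in_setU1 => /orP[/eqP Eg| eS'].
  subst e; case/orP: h => /eqP E; rewrite E /= in hg; first by [].
  by rewrite connC.
apply: connect1; apply/existsP; exists e; by rewrite eS'.
Qed.

Lemma extract Vs (Es : {set Et}) : forall n (S : {set Et}), (#|S| <= n)%N -> S \subset Es -> connected_on en Vs S ->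
  exists T, spanning_tree en Vs Es T /\ T \subset S.
Proof.
elim=> [|n IH] S hn sE hc.
  case: (boolP [exists e in S, connect (adj en (S :\ e)) (en e).1 (en e).2])
    => [/existsP[e /andP[eS he]]| hno].
    by move: hn; rewrite (cardsD1 e) eS.
  exists S; split=> //; split=> // e eS; apply/negP => he.
  by move/negP: hno; apply; apply/existsP; exists e; rewrite eS.
case: (boolP [exists e in S, connect (adj en (S :\ e)) (en e).1 (en e).2])
    => [/existsP[e /andP[eS he]]| hno].
  have h1 : (#|S :\ e| <= n)%N by move: hn; rewrite (cardsD1 e) eS.
  have h2 : S :\ e \subset Es by exact: subset_trans (subsetDl _ _) sE.
  have h3 : connected_on en Vs (S :\ e).
    move=> u v hu hv; apply: (conn_repl _ he (hc u v hu hv)).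
    by rewrite setD1K.
  have [T [hT sub]] := IH _ h1 h2 h3.
  exists T; split=> //; exact: subset_trans sub (subsetDl _ _).
exists S; split=> //; split=> // e eS; apply/negP => he.
by move/negP: hno; apply; apply/existsP; exists e; rewrite eS.
Qed.

Variables (R : realDomainType) (w : Et -> R).
Hypothesis w0 : forall e, 0 <= w e.

Lemma tweight_sub (A B : {set Et}) : A \subset B -> tweight w A <= tweight w B.
Proof.
move=> sub; rewrite /tweight [X in _ <= X](big_setID A) /= (setIidPr sub) lerDl.
by apply: sumr_ge0 => i _.
Qed.

Lemma walk_cross (Tr P : {set Et}) a x (p : seq Vt) :
  path (adj en Tr) x p -> connect (adj en P) a x -> ~~ connect (adj en P) a (last x p) ->
  exists g u v, [/\ g \in Tr, g \notin P, (en g == (u,v)) || (en g == (v,u)),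
     connect (adj en P) a u & connect (adj en (Tr :\ g)) v (last x p)].
Proof.
elim/last_ind: p => [|q z IH] /=; first by move=> _ ->.
rewrite rcons_path last_rcons => /andP[pq yz] ax az.
case: (boolP (connect (adj en P) a (last x q))) => ay.
- case/existsP: yz => g /andP[gT hg].
  exists g, (last x q), z; split => //.
  apply/negP => gP; move/negP: az; apply; apply: connect_trans ay (connect1 _).
  apply/existsP; exists g; by rewrite gP.
- have [g [u [v [gT gP huv au vy]]]] := IH pq ax ay.
  exists g, u, v; split => //.
  apply: connect_trans vy (connect1 _).
  case/existsP: yz => e /andP[eT he]; apply/existsP; exists e.
  rewrite he andbT !inE eT andbT.
  apply/eqP => eg; subst e.
  have : (u == last x q) || (u == z).
    by case/orP: he => /eqP E1; case/orP: huv => /eqP E2; rewrite E1 in E2;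
       case: E2 => E3 E4; rewrite -?E3 -?E4 eqxx ?orbT.
  by case/orP => /eqP E; rewrite E ?(negbTE ay) ?(negbTE az) in au.
Qed.

Lemma cycle_prop (Vs : {set Vt}) (Es Tr P : {set Et}) f a b :
  is_MST en w Vs Es Tr -> P \subset Tr -> f \in Es -> en f = (a,b) ->
  a \in Vs -> b \in Vs -> ~~ connect (adj en P) a b ->
  (forall g, g \in Tr -> g \notin P -> w f < w g) -> False.
Proof.
move=> [[TrE Trc Trf] Tmin] PT fE ef aV bV nab hw.
have /connectP[p pp lp] := Trc a b aV bV.
have nab' : ~~ connect (adj en P) a (last a p) by rewrite -lp.
have [g [u [v [gT gP huv au vb]]]] := walk_cross pp (connect0 _ a) nab'.
rewrite -lp in vb.
set T' := f |: (Tr :\ g).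
have s1 : Tr :\ g \subset T' := subsetUr _ _.
have PT' : P \subset Tr :\ g.
  apply/subsetP => e eP; rewrite !inE (subsetP PT) // andbT.
  by apply/eqP => eg; subst; rewrite eP in gP.
have cuv : connect (adj en T') u v.
  have ua : connect (adj en T') u a.
    by rewrite connC; apply: (conn_sub (subset_trans PT' s1)).
  have ab : connect (adj en T') a b.
    apply: connect1; apply/existsP; exists f; by rewrite setU11 ef eqxx.
  have bv : connect (adj en T') b v.
    by rewrite connC; apply: (conn_sub s1).
  exact: connect_trans (connect_trans ua ab) bv.
have cg : connect (adj en T') (en g).1 (en g).2.
  by case/orP: huv => /eqP ->; rewrite // connC.
have T'c : connected_on en Vs T'.
  move=> x y xV yV; apply: (conn_repl _ cg (Trc x y xV yV)).
  apply/subsetP => e eT; rewrite in_setU1; case: (eqVneq e g) => //= eg.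
  by apply: (subsetP s1); rewrite !inE eg eT.
have T'E : T' \subset Es.
  apply/subsetP => e; rewrite !inE => /orP[/eqP -> //| /andP[_ eT]].
  exact: (subsetP TrE).
have [T2 [hT2 sT2]] := extract (leqnn #|T'|) T'E T'c.
have h1 := Tmin _ hT2.
have h2 := tweight_sub sT2.
have h3 : tweight w T' <= tweight w (Tr :\ g) + w f.
  case: (boolP (f \in Tr :\ g)) => fin.
    by rewrite /T' (setUidPr (_ : [set f] \subset _)) ?sub1set // lerDl.
  by rewrite /T' /tweight big_setU1 //= addrC.
have h4 : tweight w Tr = w g + tweight w (Tr :\ g) by rewrite /tweight (big_setD1 g).
have h5 := hw g gT gP.
have : tweight w Tr < tweight w Tr.
  apply: le_lt_trans (le_trans h1 (le_trans h2 h3)) _.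
  rewrite h4 addrC.
by rewrite ltrD2r.
by rewrite ltxx.
Qed.

End G.

Section C.
Variables (V E : finType) (ends : E -> V * V) (T F : {set E}).

Lemma comp_self v : v \in Defs.comp ends T F v.
Proof. by rewrite inE connect0. Qed.

Lemma comp_eq u v : u \in Defs.comp ends T F v -> Defs.comp ends T F u = Defs.comp ends T F v.
Proof.
rewrite inE => vu; apply/setP => x; rewrite !inE.
by rewrite -(same_connect (connC ends (T :\: F)) vu) connC.
Qed.

Lemma memU (Q : pred {set V}) u :
  (u \in union_cc [set A in Vcc ends T F | Q A]) = Q (Defs.comp ends T F u).
Proof.
apply/bigcupP/idP.
  move=> [A]; rewrite inE => /andP[/imsetP[v _ ->] hQ] uA.
  by rewrite (comp_eq uA).
move=> hQ; exists (Defs.comp ends T F u); last exact: comp_self.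
by rewrite inE hQ andbT; apply/imsetP; exists u.
Qed.

Lemma steps_in k pre rest p : p \in steps ends T F k pre rest ->
  exists k' l1 e l2, rest = l1 ++ e :: l2 /\
    p = (e, choose_X k' (Lset ends T F (pre ++ l1) e) (Rset ends T F (pre ++ l1) e)).
Proof.
elim: rest k pre => [|e rest IH] k pre //=.
rewrite in_cons => /orP[/eqP ->|].
  by exists k, [::], e, rest; rewrite cats0.
move/IH => [k' [l1 [e' [l2 [-> ->]]]]]; exists k', (e :: l1), e', l2.
by rewrite -cats1 -catA.
Qed.
End C.

Theorem mainTheorem8 (R : realDomainType) (V E : finType) (ends : E -> V * V)
    (w : E -> R) (c : E -> R) (F T Tcc : {set E}) (s : seq E) :
  (forall e, (ends e).1 != (ends e).2) ->           (* no self-loops *)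
  connected_on ends setT setT ->                     (* G connected *)
  (forall e, 0 <= w e) -> (forall e, 0 < c e) ->
  connected_on ends setT (~: F) ->                   (* G' = G \ F connected *)
  is_MST ends w setT setT T ->                       (* T an MST of G *)
  T :&: F != set0 ->                                 (* t >= 2 *)
  is_MST (ends_cc ends T F) w (Vcc ends T F) (~: F) Tcc -> (* T'_cc MST of G'_cc *)
  uniq s -> [set x in s] = Tcc ->
  sorted (fun a b => w a <= w b) s ->                (* s = e'_1, ..., e'_{t-1} *)
  forall p, p \in counter_steps ends T F s ->       (* p = (e'_i, X_i) *)
    pcut ends w (union_cc p.2) (w p.1) \subset F.
Proof.
move=> _ _ w0 _ _ _ _ hTcc _ hs hsort p hp.
have [k [l1 [e [l2 [es ->]]]]] := steps_in hp.
rewrite cat0s /=.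
set P := [set x in l1].
have [z ->] : exists z, choose_X k (Lset ends T F l1 e) (Rset ends T F l1 e) =
    [set A in Vcc ends T F | connect (adj (ends_cc ends T F) P) z A].
  by rewrite /choose_X; case: ifP; eexists; reflexivity.
apply/subsetP => f; rewrite !inE => /andP[hcut wf].
case: (boolP (f \in F)) => // fF; exfalso.
rewrite !memU in hcut.
apply: (@cycle_prop _ _ (ends_cc ends T F) R w w0 (Vcc ends T F) (~: F) Tcc P f
   (Defs.comp ends T F (ends f).1) (Defs.comp ends T F (ends f).2) hTcc).
- apply/subsetP => x; rewrite -hs !inE es mem_cat => ->; done.
- by rewrite inE.
- by [].
- by apply/imsetP; exists (ends f).1.
- by apply/imsetP; exists (ends f).2.
- apply/negP => hab; move/negP: hcut; apply; apply/eqP.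
  by rewrite (connC _ _ z) (same_connect (connC _ _) hab) connC.
- move=> g; rewrite -hs !inE es mem_cat => /orP[->//|gin] _.
  apply: lt_le_trans wf _.
  move: hsort; rewrite es (sorted_pairwise) ?pairwise_cat => [/and3P[_ _ /= /andP[/allP H _]]|].
    by move: gin; rewrite in_cons => /orP[/eqP ->|/H].
  by move=> a b d; apply: le_trans.
Qed.
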